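(* Let $V$ be a finite set, $\lambda\in\mathbb{C}$, and $A\subseteq V$ with $|A|\ge2$. Then $\big(f_A^{(\lambda)}\big)^2=0$.
   Context: For each $i\in V$ let $\psi_i,\bar\psi_i$ be anticommuting generators of a Grassmann algebra over $\mathbb{C}$. For $A\subseteq V$, $\tau_A=\prod_{i\in A}\bar\psi_i\psi_i$ ($\tau_\emptyset=1$), and $f_A^{(\lambda)}=\lambda(1-|A|)\tau_A+\sum_{i\in A}\tau_{A\setminus\{i\}}-\sum_{i,j\in A,\ i\neq j}\bar\psi_i\psi_j\,\tau_{A\setminus\{i,j\}}$. *)

(* Defs.v *)
From HB Require Import structures.
From mathcomp Require Import all_boot all_order all_algebra.
From mathcomp Require Import complex reals.
Set Implicit Arguments. Unset Strict Implicit. Unset Printing Implicit Defensive.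
Import Order.TTheory GRing.Theory Num.Theory.
Local Open Scope ring_scope.

Section Grassmann.
Variables (R : realType) (V : finType) (A : algType R[i]).
Variables (psi psibar : V -> A).

Definition grass_gen (g : bool * V) : A := if g.1 then psibar g.2 else psi g.2.

Definition grass_monomial (S : {set bool * V}) : A :=
  \prod_(g <- enum S) grass_gen g.

(* A is the Grassmann algebra over C generated by the psi_i, psibar_i:
   the generators pairwise anticommute, and the ordered monomials in
   distinct generators form a C-basis of A. *)
Definition is_grassmann_algebra : Prop :=
  [/\ forall g h : bool * V, grass_gen g * grass_gen h = - (grass_gen h * grass_gen g),
      forall c : {ffun {set bool * V} -> R[i]},
        \sum_(S : {set bool * V}) c S *: grass_monomial S = 0 -> c = 0
    & forall a : A, exists c : {ffun {set bool * V} -> R[i]},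
        a = \sum_(S : {set bool * V}) c S *: grass_monomial S].

Definition tau (B : {set V}) : A := \prod_(i in B) (psibar i * psi i).

Definition fA (lam : R[i]) (B : {set V}) : A :=
  (lam * (1 - (#|B|)%:R)) *: tau B
  + \sum_(i in B) tau (B :\ i)
  - \sum_(i in B) \sum_(j in B | j != i) (psibar i * psi j * tau (B :\ i :\ j)).

End Grassmann.

(* Main.v *)
Require Import Defs.
From HB Require Import structures.
From mathcomp Require Import all_boot all_order all_algebra.
From mathcomp Require Import complex reals.
Import Order.TTheory GRing.Theory Num.Theory.
Local Open Scope ring_scope.

Section Proof.
Variables (R : realType) (V : finType) (A : algType R[i]) (psi psibar : V -> A).
Hypothesis H1 : forall g h : bool * V, grass_gen psi psibar g * grass_gen psi psibar h
   = - (grass_gen psi psibar h * grass_gen psi psibar g).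
Hypothesis H3 : forall a : A, exists c : {ffun {set bool * V} -> R[i]},
        a = \sum_(S : {set bool * V}) c S *: grass_monomial psi psibar S.

Local Notation gen := (grass_gen psi psibar).
Fact aa_key : unit. Proof. exact: tt. Qed.
Definition aa k : A := locked_with aa_key (psibar k * psi k).
Lemma aaE k : aa k = psibar k * psi k. Proof. by rewrite /aa unlock. Qed.

Lemma sq0 (x : A) : x * x = - (x * x) -> x * x = 0.
Proof.
move=> h; have h2 : (2 : R[i]) *: (x * x) = 0.
  by rewrite scaler_nat mulr2n {1}h addNr.
have n2 : (2 : R[i]) != 0 by rewrite pnatr_eq0.
by rewrite -[x * x]scale1r -(mulVf n2) -scalerA h2 scaler0.
Qed.

Lemma even_comm (y1 y2 z : A) : y1 * z = - (z * y1) -> y2 * z = - (z * y2) ->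
  (y1 * y2) * z = z * (y1 * y2).
Proof. by move=> h1 h2; rewrite -mulrA h2 mulrN (mulrA y1) h1 mulNr opprK mulrA. Qed.

Lemma aa_gen k g : aa k * gen g = gen g * aa k.
Proof. rewrite aaE. exact: (@even_comm (psibar k) (psi k) (gen g) (H1 (true, k) g) (H1 (false, k) g)). Qed.

Lemma aa_prod k (s : seq (bool * V)) :
  aa k * \prod_(g <- s) gen g = (\prod_(g <- s) gen g) * aa k.
Proof.
elim: s => [|g s IH]; first by rewrite big_nil mul1r mulr1.
by rewrite big_cons -mulrA -IH mulrA aa_gen -mulrA.
Qed.

Lemma aa_central k x : aa k * x = x * aa k.
Proof.
have [c ->] := H3 x; rewrite mulr_sumr mulr_suml; apply: eq_bigr => S _.
by rewrite -scalerAr -scalerAl /grass_monomial aa_prod.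
Qed.

Lemma pp0 k : psi k * psi k = 0.
Proof. exact: sq0 (H1 (false, k) (false, k)). Qed.
Lemma bb0 k : psibar k * psibar k = 0.
Proof. exact: sq0 (H1 (true, k) (true, k)). Qed.
Lemma ac_pb i j : psi i * psibar j = - (psibar j * psi i).
Proof. exact: H1 (false, i) (true, j). Qed.
Lemma ac_bp i j : psibar i * psi j = - (psi j * psibar i).
Proof. exact: H1 (true, i) (false, j). Qed.

Lemma aa_g0 m g : g = psi m \/ g = psibar m -> aa m * g = 0.
Proof.
case=> ->; rewrite aaE -mulrA ?pp0 ?mulr0 //.
by rewrite ac_pb mulrN mulrA bb0 mul0r oppr0.
Qed.

Arguments aa_g0 {m g}.
Definition HA m (x : A) := exists x', x = aa m * x'.
Definition HG m (y : A) := exists y1 y2 g, (g = psi m \/ g = psibar m) /\ y = y1 * g * y2.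
Definition Z (x y : A) := x * y = 0 /\ y * x = 0.

Lemma kill m x y : HA m x -> HG m y -> Z x y.
Proof.
move=> [x' ->] [y1 [y2 [g [hg ->]]]]; split.
  rewrite -mulrA !mulrA [aa m * _]aa_central.
  by rewrite -(mulrA x') aa_central (mulrA x') -(mulrA (x' * y1)) (aa_g0 hg) mulr0 !mul0r.
rewrite mulrA -(mulrA (y1 * g)) -aa_central (mulrA (y1 * g)) -(mulrA y1) -aa_central.
by rewrite (aa_g0 hg) mulr0 !mul0r.
Qed.

Lemma HA_HG m x : HA m x -> HG m x.
Proof.
move=> [x' ->]; exists 1, (psi m * x'), (psibar m); split; first by right.
by rewrite aaE mul1r mulrA.
Qed.

Lemma HA_l m z x : HA m x -> HA m (z * x).
Proof. by move=> [x' ->]; exists (z * x'); rewrite mulrA -aa_central -mulrA. Qed.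

Local Notation tau := (tau psi psibar).

Lemma tauA m (C : {set V}) : m \in C -> HA m (tau C).
Proof.
move=> mC; rewrite /Defs.tau -big_filter.
have: m \in [seq i <- index_enum V | i \in C] by rewrite mem_filter mC mem_index_enum.
elim: [seq i <- _ | _] => // x s IH; rewrite inE big_cons => /orP [/eqP<- | /IH]; last exact: HA_l.
by exists (\prod_(j <- s) (psibar j * psi j)); rewrite aaE.
Qed.

Arguments tauA {m C}.
Arguments HA_HG {m x}.
Arguments kill {m x y}.
Lemma Zsym x y : Z x y -> Z y x. Proof. by case. Qed.

Lemma Z_sumr (I : finType) (P : pred I) (F : I -> A) x :
  (forall i, P i -> Z x (F i)) -> Z x (\sum_(i | P i) F i).
Proof.
move=> h; split; [rewrite mulr_sumr | rewrite mulr_suml]; apply: big1 => i /h [] //.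
Qed.

Lemma Z_suml (I : finType) (P : pred I) (F : I -> A) x :
  (forall i, P i -> Z (F i) x) -> Z (\sum_(i | P i) F i) x.
Proof. by move=> h; apply: Zsym; apply: Z_sumr => i /h /Zsym. Qed.

Lemma Z_scale c x y : Z x y -> Z (c *: x) y.
Proof. by case=> h1 h2; split; [rewrite -scalerAl h1 | rewrite -scalerAr h2]; rewrite scaler0. Qed.

Definition TT (B : {set V}) i j := psibar i * psi j * tau (B :\ i :\ j).

Lemma TT_Gi B i j : HG i (TT B i j).
Proof. exists 1, (psi j * tau (B :\ i :\ j)), (psibar i); split; first by right.
by rewrite /TT mul1r mulrA. Qed.
Lemma TT_Gj B i j : HG j (TT B i j).
Proof. by exists (psibar i), (tau (B :\ i :\ j)), (psi j); split; first by left. Qed.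
Lemma TT_A (B : {set V}) i j m : m \in B -> m != i -> m != j -> HA m (TT B i j).
Proof. by move=> mB mi mj; apply: HA_l; apply: tauA; rewrite !inE mi mj. Qed.

Arguments TT_A {B i j m}.
Lemma other {B : {set V}} {C : {set V}} : (#|C| < #|B|)%N -> exists m, m \in B /\ m \notin C.
Proof.
move=> h; have /subsetPn [m h1 h2] : ~~ (B \subset C).
  by apply/negP => /subset_leq_card; rewrite leqNgt h.
by exists m.
Qed.

Lemma fsq lam (B : {set V}) : (1 < #|B|)%N ->
  fA psi psibar lam B * fA psi psibar lam B =
  (\sum_(i in B) tau (B :\ i)) * (\sum_(i in B) tau (B :\ i)) +
  (\sum_(i in B) \sum_(j in B | j != i) TT B i j) * (\sum_(i in B) \sum_(j in B | j != i) TT B i j).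
Proof.
move=> hB; rewrite /fA /TT.
set u := _ *: _. set v := \sum_(i in B) tau (B :\ i).
set w := \sum_(i in B) \sum_(j in B | j != i) _.
have Zuu : Z u u.
  have := @other B set0; rewrite cards0 => /(_ (ltnW hB)) [m [mB _]].
  by apply/Z_scale/Zsym/Z_scale; apply: (kill (tauA mB) (HA_HG (tauA mB))).
have Zuv : Z u v.
  apply/Z_scale/Z_sumr => i iB.
  have := @other B [set i]; rewrite cards1 => /(_ hB) [m [mB]].
  rewrite inE => mi; apply: (kill (tauA mB) (HA_HG (tauA _))).
  by rewrite !inE mi mB.
have Zuw : Z u w.
  apply/Z_scale/Z_sumr => i iB; apply: Z_sumr => j /andP [jB ji].
  exact: (kill (tauA iB) (TT_Gi B i j)).
have Zvw : Z v w.
  apply: Z_suml => i iB; apply: Z_sumr => k kB; apply: Z_sumr => l /andP [lB lk].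
  case: (eqVneq k i) => [ki|ki].
    subst k; apply: (kill (tauA _) (TT_Gj B i l)); by rewrite !inE lk lB.
  apply: (kill (tauA _) (TT_Gi B k l)); by rewrite !inE ki kB.
rewrite mulrBl !mulrDl !mulrBr !mulrDr.
rewrite Zuu.1 Zuv.1 Zuv.2 Zuw.1 Zuw.2 Zvw.1 Zvw.2.
by rewrite !(addr0,add0r,subr0,sub0r,opprK).
Qed.

Lemma vv3 (B : {set V}) : (2 < #|B|)%N ->
  Z (\sum_(i in B) tau (B :\ i)) (\sum_(i in B) tau (B :\ i)).
Proof.
move=> hB; apply: Z_suml => i iB; apply: Z_sumr => k kB.
have hC : (#|[set i; k]| < #|B|)%N.
  by rewrite cards2; case: (i != k) => //; apply: ltnW.
have [m [mB]] := other (B:=B) hC; rewrite !inE negb_or => /andP [mi mk].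
by apply: (kill (tauA (m:=m) _) (HA_HG (tauA (m:=m) _))); rewrite !inE ?mi ?mk mB.
Qed.

Lemma ww3 (B : {set V}) : (2 < #|B|)%N ->
  Z (\sum_(i in B) \sum_(j in B | j != i) TT B i j) (\sum_(i in B) \sum_(j in B | j != i) TT B i j).
Proof.
move=> hB; apply: Z_suml => i iB; apply: Z_suml => j /andP [jB ji].
apply: Z_sumr => k kB; apply: Z_sumr => l /andP [lB lk].
have hC : (#|[set i; j]| < #|B|)%N.
  by rewrite cards2; case: (i != j) => //; apply: ltnW.
have [m [mB mij]] := other (B:=B) hC.
case hk: (k \in [set i; j]); last first.
  move/negbT: hk; rewrite !inE negb_or => /andP [ki kj].
  exact: (kill (TT_A kB ki kj) (TT_Gi B k l)).
case hl: (l \in [set i; j]); last first.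
  move/negbT: hl; rewrite !inE negb_or => /andP [li lj].
  exact: (kill (TT_A lB li lj) (TT_Gj B k l)).
have mk : m != k by apply: contraNneq mij => ->.
have ml : m != l by apply: contraNneq mij => ->.
move: mij; rewrite !inE negb_or => /andP [mi mj].
exact: (kill (TT_A mB mi mj) (HA_HG (TT_A mB mk ml))).
Qed.

Lemma aa2 k : aa k * aa k = 0.
Proof. by rewrite {2}aaE mulrA (aa_g0 (or_intror erefl)) mul0r. Qed.

Lemma quad0 i j : psibar i * psi j * (psibar i * psi j) = 0.
Proof. by rewrite -mulrA (mulrA (psi j)) ac_pb mulNr -mulrA pp0 mulr0 oppr0 mulr0. Qed.

Lemma quad i j : psibar i * psi j * (psibar j * psi i) = - (aa j * aa i).
Proof.
rewrite -mulrA (mulrA (psi j)) ac_pb -(aaE j) mulNr mulrN mulrA.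
by rewrite -(aa_central j (psibar i)) -(mulrA (aa j)) -(aaE i).
Qed.

Lemma n2 p q : p != q ->
  let B := [set p; q] in
  (\sum_(i in B) tau (B :\ i)) * (\sum_(i in B) tau (B :\ i)) +
  (\sum_(i in B) \sum_(j in B | j != i) TT B i j) * (\sum_(i in B) \sum_(j in B | j != i) TT B i j) = 0.
Proof.
move=> pq B.
have pnq : p \notin [set q] by rewrite inE.
have e1 : B :\ p = [set q] by rewrite /B setU1K.
have e2 : B :\ q = [set p].
  apply/setP => x; rewrite !inE.
  by case: (eqVneq x q) => [->|xq]; case: (eqVneq x p) => [xp|xp] //=; rewrite eq_sym (negPf pq).
have e3 : B :\ p :\ q = set0.
  by apply/setP => x; rewrite !inE; case: (eqVneq x q); case: (eqVneq x p).
have e4 : B :\ q :\ p = set0.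
  by apply/setP => x; rewrite !inE; case: (eqVneq x q); case: (eqVneq x p).
have t1 k : tau [set k] = aa k by rewrite /Defs.tau big_set1 aaE.
have t0 : tau set0 = 1 by rewrite /Defs.tau big_set0.
have s1 : \sum_(j in B | j != p) TT B p j = TT B p q.
  apply: big_pred1 => x; rewrite /= !inE.
  by case: (eqVneq x q) => [->|xq]; case: (eqVneq x p) => [xp|xp] //=; rewrite ?orbT eq_sym pq.
have s2 : \sum_(j in B | j != q) TT B q j = TT B q p.
  apply: big_pred1 => x; rewrite /= !inE.
  by case: (eqVneq x q) => [->|xq]; case: (eqVneq x p) => [xp|xp] //=; rewrite ?andbF eq_sym (negPf pq).
have sB (F : V -> A) : \sum_(i in B) F i = F p + F q by rewrite big_setU1 //= big_set1.
rewrite !sB s1 s2 e1 e2 !t1 /TT e3 e4 t0 !mulr1.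
rewrite !mulrDl !mulrDr !aa2 !quad0 !quad !(addr0, add0r).
by rewrite -opprD subrr.
Qed.

End Proof.

Theorem corollary4p2 (R : realType) (V : finType) (A : algType R[i])
    (psi psibar : V -> A) (lam : R[i]) (B : {set V}) :
  is_grassmann_algebra psi psibar ->
  (2 <= #|B|)%N ->
  fA psi psibar lam B * fA psi psibar lam B = 0.
Proof.
move=> [H1 _ H3] hB; rewrite (@fsq _ _ _ _ _ H1 H3 lam B hB).
case: (ltngtP 2 #|B|) => [h3||h2].
- by rewrite (@vv3 _ _ _ _ _ H1 H3 B h3).1 (@ww3 _ _ _ _ _ H1 H3 B h3).1 addr0.
- by rewrite ltnNge hB.
- have /cards2P [p [q [pq eB]]] : #|B| == 2 by rewrite -h2.
  by rewrite eB; exact: (@n2 _ _ _ _ _ H1 H3).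
Qed.
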